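(* Let $X=\{x\in\mathbb{R}^n: Cx\le d\}$ be a polyhedral set ($C\in\mathbb{R}^{p\times n}$, $d\in\mathbb{R}^p$), let $g:\mathbb{R}^m\to\mathbb{R}$ be $\sigma_g$-strongly convex with $L_g$-Lipschitz continuous gradient, let $A\in\mathbb{R}^{m\times n}$ be nonzero, and set $f(x)=g(Ax)$. Assume the optimal set $X^*$ of $\min_{x\in X}f(x)$ is nonempty. Then there is a unique $t^*\in\mathbb{R}^m$ with $Ax^*=t^*$ for all $x^*\in X^*$, so that $X^*=\{x: Ax=t^*,\ Cx\le d\}$; let $\theta>0$ be a Hoffman constant for this polyhedron, i.e. $$\|x-[x]_{X^*}\|\le\theta\left\|\begin{pmatrix}Ax-t^*\\ [Cx-d]_+\end{pmatrix}\right\|\qquad\forall x\in\mathbb{R}^n .$$ Then $\nabla f$ is Lipschitz continuous with constant $L_f=L_g\|A\|^2$, and $f$ is quasi-strongly convex on $X$ with constant $\kappa_f=\sigma_g/\theta^2$, i.e. $$f^*\ge f(x)+\langle\nabla f(x),\bar x-x\rangle+\frac{\sigma_g}{2\theta^2}\|x-\bar x\|^2\qquad\forall x\in X,\ \bar x=[x]_{X^*}.$$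
   Context: $\|\cdot\|$ denotes the Euclidean norm (spectral norm for matrices), $[u]_S$ the Euclidean projection onto a closed convex set $S$, and $[v]_+$ the componentwise positive part. $g$ is $\sigma_g$-strongly convex means $g(z)\ge g(w)+\langle\nabla g(w),z-w\rangle+\frac{\sigma_g}{2}\|z-w\|^2$ for all $z,w$, with $\sigma_g>0$. $f^*=\min_{x\in X}f(x)$. *)

(* Defs.v *)
From Stdlib Require Import Reals.
From mathcomp Require Import all_boot.
Set Implicit Arguments.
Unset Strict Implicit.
Unset Printing Implicit Defensive.
Open Scope R_scope.

Definition vec (n : nat) := 'I_n -> R.
Definition mat (p n : nat) := 'I_p -> 'I_n -> R.

Definition dot (n : nat) (x y : vec n) : R := \big[Rplus/0]_(i < n) (x i * y i).
Definition vnorm (n : nat) (x : vec n) : R := sqrt (dot x x).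

Definition vadd (n : nat) (x y : vec n) : vec n := fun i => x i + y i.
Definition vsub (n : nat) (x y : vec n) : vec n := fun i => x i - y i.

Definition mulmv (p n : nat) (A : mat p n) (x : vec n) : vec p :=
  fun i => \big[Rplus/0]_(j < n) (A i j * x j).

Definition vle (p : nat) (u v : vec p) : Prop := forall i, u i <= v i.
Definition vpos (p : nat) (u : vec p) : vec p := fun i => Rmax (u i) 0.

Definition stack_norm (m p : nat) (u : vec m) (v : vec p) : R :=
  sqrt (dot u u + dot v v).

Definition is_spectral_norm (m n : nat) (A : mat m n) (nA : R) : Prop :=
  is_lub (fun r => exists x : vec n, vnorm x <= 1 /\ r = vnorm (mulmv A x)) nA.

Definition is_gradient (n : nat) (f : vec n -> R) (gf : vec n -> vec n) : Prop :=
  forall x eps, 0 < eps -> exists delta, 0 < delta /\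
    forall h : vec n, vnorm h < delta ->
      Rabs (f (vadd x h) - f x - dot (gf x) h) <= eps * vnorm h.

Definition strongly_convex (n : nat) (g : vec n -> R) (gg : vec n -> vec n)
  (sigma : R) : Prop :=
  forall z w, g z >= g w + dot (gg w) (vsub z w) + sigma / 2 * (vnorm (vsub z w))^2.

Definition lipschitz (n : nat) (F : vec n -> vec n) (L : R) : Prop :=
  forall z w, vnorm (vsub (F z) (F w)) <= L * vnorm (vsub z w).

Definition polyhedron (p n : nat) (C : mat p n) (d : vec p) (x : vec n) : Prop :=
  vle (mulmv C x) d.

Definition argmin_set (n : nat) (f : vec n -> R) (X : vec n -> Prop) (x : vec n) : Prop :=
  X x /\ forall y, X y -> f x <= f y.

Definition is_min_value (n : nat) (f : vec n -> R) (X : vec n -> Prop) (fs : R) : Prop :=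
  (exists x, X x /\ f x = fs) /\ forall x, X x -> fs <= f x.

Definition is_proj (n : nat) (S : vec n -> Prop) (x p : vec n) : Prop :=
  S p /\ forall y, S y -> vnorm (vsub x p) <= vnorm (vsub x y).

(* Main.v *)
Require Import Defs.
From Stdlib Require Import Reals Lra FunctionalExtensionality.
From HB Require Import structures.
From mathcomp Require Import all_boot.
Open Scope R_scope.

HB.instance Definition _ := Monoid.isComLaw.Build R 0 Rplus
  (fun x y z => esym (Rplus_assoc x y z)) Rplus_comm Rplus_0_l.

Lemma sum_add n (F G : 'I_n -> R) : \big[Rplus/0]_(i<n) (F i + G i) = \big[Rplus/0]_(i<n) F i + \big[Rplus/0]_(i<n) G i.
Proof. exact: big_split. Qed.
Lemma sum_scal n c (F : 'I_n -> R) : \big[Rplus/0]_(i<n) (c * F i) = c * \big[Rplus/0]_(i<n) F i.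
Proof. elim/big_rec2: _ => [|i y1 y2 _ ->]; ring. Qed.
Lemma sum_ge0 n (F : 'I_n -> R) : (forall i, 0 <= F i) -> 0 <= \big[Rplus/0]_(i<n) F i.
Proof. move=> H; apply: big_ind => //; [lra| move=> x y; lra]. Qed.
Lemma dot_zero n (x : vec n) : dot x x = 0 -> forall i, x i = 0.
Proof.
move=> H i; move: H; rewrite /dot (bigD1 i) //=.
set S := (X in _ + X = _).
have H1 : 0 <= S.
  rewrite /S; apply: big_ind => //; [lra| move=> a b; lra| move=> j _; nra].
move=> H2; clearbody S; have H3 : x i * x i = 0 by nra.
by case: (Rmult_integral _ _ H3).
Qed.

Lemma dot_ge0 n (x : vec n) : 0 <= dot x x.
Proof. apply: sum_ge0 => i; nra. Qed.
Lemma dot_sym n (x y : vec n) : dot x y = dot y x.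
Proof. apply: eq_bigr => i _; ring. Qed.
Lemma dot_lin n (x y z : vec n) a b :
  dot (fun i => a * x i + b * y i) z = a * dot x z + b * dot y z.
Proof.
rewrite /dot -!sum_scal -sum_add; apply: eq_bigr => i _; ring.
Qed.
Lemma dot_ext n (x y z : vec n) : (forall i, x i = y i) -> dot x z = dot y z.
Proof. move=> H; apply: eq_bigr => i _; by rewrite H. Qed.
Lemma dot_sub n (x y z : vec n) : dot (vsub x y) z = dot x z - dot y z.
Proof.
rewrite (dot_ext _ _ (fun i => 1 * x i + (-1) * y i)) ?dot_lin; last by move=> i; rewrite /vsub; ring.
ring.
Qed.
Lemma dot_scal n (x z : vec n) a : dot (fun i => a * x i) z = a * dot x z.
Proof. rewrite /dot -sum_scal; apply: eq_bigr => i _; ring. Qed.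

Definition trm (p n : nat) (A : mat p n) : mat n p := fun j i => A i j.
Arguments trm {p n}.

Lemma mulmv_lin p n (A : mat p n) (x y : vec n) a b :
  mulmv A (fun j => a * x j + b * y j) = fun i => a * mulmv A x i + b * mulmv A y i.
Proof.
apply: functional_extensionality => i.
rewrite /mulmv -!sum_scal -sum_add; apply: eq_bigr => j _; ring.
Qed.
Lemma mulmv_ext p n (A : mat p n) (x y : vec n) : (forall i, x i = y i) -> mulmv A x = mulmv A y.
Proof. move=> H; have -> : x = y by apply: functional_extensionality. by []. Qed.
Lemma mulmv_sub p n (A : mat p n) (x y : vec n) : mulmv A (vsub x y) = vsub (mulmv A x) (mulmv A y).
Proof.
rewrite (@mulmv_ext _ _ A _ (fun i => 1 * x i + (-1) * y i)) ?mulmv_lin; last by move=> i; rewrite /vsub; ring.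
apply: functional_extensionality => i; rewrite /vsub; ring.
Qed.
Lemma mulmv_add p n (A : mat p n) (x y : vec n) : mulmv A (vadd x y) = vadd (mulmv A x) (mulmv A y).
Proof.
rewrite (@mulmv_ext _ _ A _ (fun i => 1 * x i + 1 * y i)) ?mulmv_lin; last by move=> i; rewrite /vadd; ring.
apply: functional_extensionality => i; rewrite /vadd; ring.
Qed.
Lemma mulmv_scal p n (A : mat p n) (x : vec n) a :
  mulmv A (fun j => a * x j) = fun i => a * mulmv A x i.
Proof.
apply: functional_extensionality => i.
rewrite /mulmv -!sum_scal; apply: eq_bigr => j _; ring.
Qed.
Lemma dot_tr p n (A : mat p n) (x : vec n) (u : vec p) :
  dot (mulmv A x) u = dot x (mulmv (trm A) u).
Proof.
rewrite /dot /mulmv /trm.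
transitivity (\big[Rplus/0]_(i < p) \big[Rplus/0]_(j < n) (A i j * x j * u i)).
  apply: eq_bigr => i _; rewrite Rmult_comm -sum_scal; apply: eq_bigr => j _; ring.
rewrite exchange_big; apply: eq_bigr => j _; rewrite -sum_scal; apply: eq_bigr => i _; ring.
Qed.

Lemma vnorm_ge0 n (x : vec n) : 0 <= vnorm x.
Proof. exact: sqrt_pos. Qed.
Lemma vnorm_sq n (x : vec n) : vnorm x ^ 2 = dot x x.
Proof. rewrite /vnorm /= Rmult_1_r sqrt_sqrt //; exact: dot_ge0. Qed.
Lemma vnorm_scal n (x : vec n) a : vnorm (fun i => a * x i) = Rabs a * vnorm x.
Proof.
rewrite /vnorm dot_scal (dot_sym _ x) dot_scal.
rewrite -Rmult_assoc sqrt_mult_alt; last by nra.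
by rewrite -sqrt_Rsqr_abs.
Qed.
Lemma vnorm_subC n (x y : vec n) : vnorm (vsub x y) = vnorm (vsub y x).
Proof.
have -> : vsub y x = fun i => -1 * vsub x y i.
  by apply: functional_extensionality => i; rewrite /vsub; ring.
rewrite vnorm_scal Rabs_Ropp Rabs_R1; ring.
Qed.

Lemma CS n (u v : vec n) : dot u v <= vnorm u * vnorm v.
Proof.
have Q : forall t, 0 <= dot u u - 2 * t * dot u v + t * t * dot v v.
  move=> t; have := dot_ge0 _ (fun i => u i - t * v i).
  have -> : dot (fun i => u i - t * v i) (fun i => u i - t * v i) =
    \big[Rplus/0]_(i < n) (u i * u i) + (-2 * t) * \big[Rplus/0]_(i < n) (u i * v i)
    + (t * t) * \big[Rplus/0]_(i < n) (v i * v i).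
    rewrite -!sum_scal -!sum_add; apply: eq_bigr => i _; ring.
  rewrite /dot; lra.
set U := dot u u in Q *; set V := dot v v in Q *; set D := dot u v in Q *.
have HU : 0 <= U by exact: dot_ge0.
have HV : 0 <= V by exact: dot_ge0.
have HD : D * D <= U * V.
  case: (Req_dec V 0) => HV0.
    case: (Req_dec D 0) => HD0; first by rewrite HD0 HV0; nra.
    have := Q ((U + 1) / (2 * D)); rewrite HV0.
    have -> : 2 * ((U + 1) / (2 * D)) * D = U + 1 by field.
    lra.
  have := Q (D / V).
  have -> : 2 * (D / V) * D = 2 * (D * D) / V by field.
  have -> : D / V * (D / V) * V = (D * D) / V by field.
  move=> H.
  have H' : 0 <= (U - 2 * (D * D) / V + D * D / V) * V by apply: Rmult_le_pos; lra.
  have -> : U * V = (U - 2 * (D * D) / V + D * D / V) * V + D * D by field.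
  lra.
rewrite /vnorm -/U -/V -sqrt_mult_alt //.
apply: Rle_trans (Rle_abs D) _.
rewrite -sqrt_Rsqr_abs; apply: sqrt_le_1_alt; rewrite /Rsqr; lra.
Qed.

Lemma vzero n : vnorm (fun _ : 'I_n => 0) = 0.
Proof. rewrite /vnorm /dot big1 ?sqrt_0 // => i _; ring. Qed.
Lemma mulmv0 p n (A : mat p n) : mulmv A (fun _ => 0) = fun _ => 0.
Proof. apply: functional_extensionality => i; rewrite /mulmv big1 // => j _; ring. Qed.

Lemma spec_ge0 m n (A : mat m n) nA : is_spectral_norm A nA -> 0 <= nA.
Proof.
move=> [Hub _]; apply: Hub; exists (fun _ => 0); rewrite mulmv0 !vzero; split; lra.
Qed.
Arguments spec_ge0 {m n A nA}.

Lemma spec_bound m n (A : mat m n) nA : is_spectral_norm A nA ->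
  forall x, vnorm (mulmv A x) <= nA * vnorm x.
Proof.
move=> H x; have H0 := spec_ge0 H; case: H => [Hub _].
set r := vnorm x; set N := vnorm (mulmv A x).
have Hr : 0 <= r by exact: vnorm_ge0.
have HN : 0 <= N by exact: vnorm_ge0.
have Heps : forall e, 0 < e -> N <= nA * (r + e).
  move=> e He.
  have Hre : 0 < r + e by lra.
  have := Hub (vnorm (mulmv A (fun i => / (r + e) * x i))).
  rewrite mulmv_scal !vnorm_scal Rabs_right; last by apply: Rle_ge; apply: Rlt_le; apply: Rinv_0_lt_compat.
  move=> Hle.
  have Hle' : / (r + e) * N <= nA.
    have Hpos : 0 <= / (r + e) by apply: Rlt_le; apply: Rinv_0_lt_compat.
    apply: Hle; exists (fun i => / (r + e) * x i); split; last first.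
      by rewrite mulmv_scal vnorm_scal Rabs_right //; apply: Rle_ge.
    rewrite vnorm_scal Rabs_right; last by apply: Rle_ge.
    rewrite -/r; apply: (Rmult_le_reg_l (r + e)) => //.
    rewrite -Rmult_assoc Rinv_r; lra.
  have -> : N = (r + e) * (/ (r + e) * N) by field; lra.
  rewrite Rmult_comm; apply: Rmult_le_compat_r; lra.
apply: Rnot_lt_le => Hc.
have Hpos : 0 < (N - nA * r) / (nA + 1) by apply: Rdiv_lt_0_compat; lra.
have := Heps _ Hpos.
have -> : nA * (r + (N - nA * r) / (nA + 1)) = nA * r + nA / (nA + 1) * (N - nA * r) by field; lra.
have : nA / (nA + 1) < 1.
  apply: (Rmult_lt_reg_r (nA + 1)); first lra.
  rewrite /Rdiv Rmult_assoc Rinv_l; lra.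
nra.
Qed.
Arguments spec_bound {m n A nA}.

Lemma spec_bound_tr m n (A : mat m n) nA : is_spectral_norm A nA ->
  forall u, vnorm (mulmv (trm A) u) <= nA * vnorm u.
Proof.
move=> H u; have H0 := spec_ge0 H.
set w := mulmv (trm A) u.
have E : vnorm w ^ 2 = dot (mulmv A w) u by rewrite vnorm_sq dot_tr.
have : dot (mulmv A w) u <= nA * vnorm w * vnorm u.
  apply: Rle_trans (CS _ _ _) _; apply: Rmult_le_compat_r; first exact: vnorm_ge0.
  exact: (spec_bound H).
have := vnorm_ge0 _ w; have := vnorm_ge0 _ u.
rewrite -E /= Rmult_1_r => HU HW Hle.
apply: Rnot_lt_le => Hc.
have Hw : 0 < vnorm w by nra.
have : nA * vnorm u * vnorm w < vnorm w * vnorm w by apply: Rmult_lt_compat_r.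
nra.
Qed.

Arguments spec_bound_tr {m n A nA}.

Lemma lip_ge0 m (F : vec m -> vec m) L (i : 'I_m) : lipschitz F L -> 0 <= L.
Proof.
move=> H; apply: Rnot_lt_le => HL.
have := H (fun _ => 1) (fun _ => 0).
have := vnorm_ge0 _ (vsub (F (fun _ => 1)) (F (fun _ => 0))).
have := vnorm_ge0 _ (vsub (fun _ : 'I_m => 1) (fun _ => 0)).
move=> H1 H2 H3.
have H4 : vnorm (vsub (fun _ : 'I_m => 1) (fun _ => 0)) = 0 by nra.
have H5 : dot (vsub (fun _ : 'I_m => 1) (fun _ => 0)) (vsub (fun _ : 'I_m => 1) (fun _ => 0)) = 0.
  by rewrite -vnorm_sq H4 /=; ring.
have := dot_zero _ _ H5 i; rewrite /vsub; lra.
Qed.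

Theorem theorem8 (n m p : nat) (C : mat p n) (d : vec p) (A : mat m n)
  (g : vec m -> R) (gg : vec m -> vec m) (sigma_g L_g : R) (nA : R) :
  is_gradient g gg ->
  0 < sigma_g ->
  strongly_convex g gg sigma_g ->
  lipschitz gg L_g ->
  (exists i j, A i j <> 0) ->
  is_spectral_norm A nA ->
  let f := fun x : vec n => g (mulmv A x) in
  let X := polyhedron C d in
  let Xstar := argmin_set f X in
  (exists xs, Xstar xs) ->
  (exists! t : vec m,
      (forall xs, Xstar xs -> mulmv A xs = t) /\
      (forall x, Xstar x <-> (mulmv A x = t /\ vle (mulmv C x) d))) /\
  (exists gf : vec n -> vec n,
      is_gradient f gf /\
      lipschitz gf (L_g * nA ^ 2) /\
      forall (t : vec m) (theta : R),
        (forall xs, Xstar xs -> mulmv A xs = t) ->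
        0 < theta ->
        (forall x xb, is_proj Xstar x xb ->
           vnorm (vsub x xb) <=
             theta * stack_norm (vsub (mulmv A x) t) (vpos (vsub (mulmv C x) d))) ->
        forall fs, is_min_value f X fs ->
        forall x xb, X x -> is_proj Xstar x xb ->
          fs >= f x + dot (gf x) (vsub xb x)
                + sigma_g / (2 * theta ^ 2) * (vnorm (vsub x xb)) ^ 2).
Proof.
move=> Hgrad Hsig Hsc Hlip [i0 [j0 HA0]] Hspec f X Xstar [xs Hxs].
have HnA := spec_ge0 Hspec.
have HLg : 0 <= L_g := lip_ge0 _ _ _ i0 Hlip.
have uniqA : forall x1 x2, Xstar x1 -> Xstar x2 -> mulmv A x1 = mulmv A x2.
  move=> x1 x2 [HX1 Hm1] [HX2 Hm2].
  set M := fun j => / 2 * x1 j + / 2 * x2 j.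
  have HXM : X M.
    rewrite /X /polyhedron /M mulmv_lin => i.
    have := HX1 i; have := HX2 i; lra.
  have h1 := Hm1 _ HXM; have h2 := Hm1 _ HX2; have h3 := Hm2 _ HX1.
  rewrite /f /M mulmv_lin in h1 h2 h3 *.
  set a := mulmv A x1 in h1 h2 h3 *; set b := mulmv A x2 in h1 h2 h3 *.
  set Mv := (fun i => / 2 * a i + / 2 * b i) in h1.
  set w := vsub a Mv.
  have Ew : vsub b Mv = fun i => -1 * w i.
    by apply: functional_extensionality => i; rewrite /w /vsub /Mv; field.
  have s1 := Hsc a Mv; have s2 := Hsc b Mv.
  rewrite -/w Ew in s1 s2.
  rewrite (dot_sym _ (gg Mv)) dot_scal dot_sym vnorm_scal Rabs_Ropp Rabs_R1 in s2.
  have Hw0 : vnorm w ^ 2 = 0.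
    have := pow2_ge_0 (vnorm w); nra.
  rewrite vnorm_sq in Hw0.
  apply: functional_extensionality => i.
  have := dot_zero _ _ Hw0 i; rewrite /w /vsub /Mv; lra.
split.
  exists (mulmv A xs); split.
    split; first by move=> x Hx; exact: uniqA.
    move=> x; split.
      by move=> Hx; split; [exact: uniqA | case: Hx].
    move=> [HAx HCx]; split => // y Hy.
    rewrite /f HAx; exact: (proj2 Hxs y Hy).
  by move=> t' [H1 _]; apply: H1.
pose gf := fun x : vec n => mulmv (trm A) (gg (mulmv A x)).
exists gf; split; last split.
- move=> x eps Heps.
  have He' : 0 < eps / (nA + 1) by apply: Rdiv_lt_0_compat; lra.
  have [dl [Hdl Hd]] := Hgrad (mulmv A x) _ He'.
  exists (dl / (nA + 1)); split; first by apply: Rdiv_lt_0_compat; lra.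
  move=> h Hh.
  have Hh0 := vnorm_ge0 _ h.
  have HAh := spec_bound Hspec h.
  have HAh' : vnorm (mulmv A h) < dl.
    apply: Rle_lt_trans HAh _.
    have : vnorm h * (nA + 1) < dl.
      have -> : dl = dl / (nA + 1) * (nA + 1) by field; lra.
      apply: Rmult_lt_compat_r; lra.
    nra.
  have := Hd _ HAh'.
  rewrite /f /gf mulmv_add (dot_sym _ (mulmv (trm A) _)) -dot_tr (dot_sym _ (mulmv A h)) => H.
  apply: Rle_trans H _.
  have HAh0 := vnorm_ge0 _ (mulmv A h).
  apply: Rle_trans (_ : eps / (nA + 1) * (nA * vnorm h) <= _).
    by apply: Rmult_le_compat_l; lra.
  have -> : eps / (nA + 1) * (nA * vnorm h) = eps * vnorm h * (nA / (nA + 1)) by field; lra.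
  have : nA / (nA + 1) <= 1.
    apply: (Rmult_le_reg_r (nA + 1)); first lra.
    rewrite /Rdiv Rmult_assoc Rinv_l; lra.
  have : 0 <= eps * vnorm h by nra.
  nra.
- move=> x z; rewrite /gf -mulmv_sub.
  apply: Rle_trans (spec_bound_tr Hspec _) _.
  apply: Rle_trans (_ : nA * (L_g * vnorm (vsub (mulmv A x) (mulmv A z))) <= _).
    by apply: Rmult_le_compat_l => //; apply: Hlip.
  rewrite -mulmv_sub.
  have := spec_bound Hspec (vsub x z).
  have := vnorm_ge0 _ (vsub x z).
  move=> H1 H2.
  have : L_g * vnorm (mulmv A (vsub x z)) <= L_g * (nA * vnorm (vsub x z)).
    by apply: Rmult_le_compat_l.
  simpl; nra.
- move=> t theta Ht Htheta Hhof fs [[y [Hy Hfy]] Hfs] x xb HX Hp.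
  have Hxb : Xstar xb by case: Hp.
  have Efs : f xb = fs.
    have := Hfs _ (proj1 Hxb); have := proj2 Hxb _ Hy; lra.
  have HAxb : mulmv A xb = t by exact: Ht.
  have Hst : stack_norm (vsub (mulmv A x) t) (vpos (vsub (mulmv C x) d)) =
             vnorm (vsub (mulmv A xb) (mulmv A x)).
    rewrite /stack_norm HAxb vnorm_subC /vnorm (_ : dot _ (vpos _) = 0) ?Rplus_0_r //.
    rewrite /dot big1 // => i _; rewrite /vpos /vsub Rmax_right; first ring.
    have := HX i; lra.
  have Hh := Hhof _ _ Hp; rewrite Hst in Hh.
  have Hs := Hsc (mulmv A xb) (mulmv A x).
  rewrite -Efs /f /gf; rewrite /f in Hs.
  rewrite dot_sym -dot_tr dot_sym mulmv_sub.
  set N := vnorm (vsub x xb) in Hh *; set Mn := vnorm (vsub (mulmv A xb) (mulmv A x)) in Hh Hs *.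
  have HN : 0 <= N by exact: vnorm_ge0.
  have Hq : sigma_g / (2 * theta ^ 2) * N ^ 2 <= sigma_g / 2 * Mn ^ 2.
    have : N ^ 2 <= theta ^ 2 * Mn ^ 2.
      rewrite -Rpow_mult_distr; apply: pow_incr; lra.
    move=> H2.
    have Ht2 : 0 < theta ^ 2 by apply: pow_lt.
    have -> : sigma_g / 2 * Mn ^ 2 = sigma_g / (2 * theta ^ 2) * (theta ^ 2 * Mn ^ 2) by field; lra.
    apply: Rmult_le_compat_l => //.
    apply: Rlt_le; apply: Rdiv_lt_0_compat; lra.
  lra.
Qed.
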